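(* Let $k$ be a field of characteristic $\neq 2$, and let $\mathfrak g_\boxtimes$, $\Omega,\Omega',\Omega''$, $\mathfrak g$, $\Psi$, $u_0,u_1,u_2$ be as in the context. Then (i) $\Psi(\Omega)=u_0(t-1)k[t]\oplus u_1k[t]\oplus u_2tk[t]$; (ii) $\Psi(\Omega')=u_0t'k[t']\oplus u_1(t'-1)k[t']\oplus u_2k[t']$; (iii) $\Psi(\Omega'')=u_0k[t'']\oplus u_1t''k[t'']\oplus u_2(t''-1)k[t'']$. In particular, $\mathfrak g$ is the direct sum of the subalgebras $\Psi(\Omega)$, $\Psi(\Omega')$, $\Psi(\Omega'')$.
   Context: $\mathcal A=k[t,t^{-1},(1-t)^{-1}]\subset k(t)$, $t'=1-t^{-1}$, $t''=(1-t)^{-1}$, $\mathfrak g=\mathfrak{sl}_2(k)\otimes_k\mathcal A$ (an $\mathcal A$-module via the second factor; $k[s]$ for $s\in\mathcal A$ denotes the $k$-subalgebra of $\mathcal A$ generated by $s$). The Tetrahedron algebra $\mathfrak g_\boxtimes$ is the Lie algebra over $k$ with generators $X_{ij}$ ($i,j\in\{0,1,2,3\}$, $i\neq j$) and relations $X_{ij}+X_{ji}=0$ for $i\neq j$; $[X_{ij},X_{jk}]=2(X_{ij}+X_{jk})$ for mutually distinct $i,j,k$; $[X_{hi},[X_{hi},[X_{hi},X_{jk}]]]=4[X_{hi},X_{jk}]$ for mutually distinct $h,i,j,k$. $\Omega$ (resp. $\Omega'$, $\Omega''$) is the subalgebra of $\mathfrak g_\boxtimes$ generated by $X_{12},X_{03}$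 (resp. $X_{23},X_{01}$; $X_{31},X_{02}$). With $x=\begin{pmatrix}-1&2\\0&1\end{pmatrix}$, $y=\begin{pmatrix}-1&0\\-2&1\end{pmatrix}$, $z=\begin{pmatrix}1&0\\0&-1\end{pmatrix}$, $\Psi:\mathfrak g_\boxtimes\to\mathfrak g$ is the Lie algebra homomorphism determined by $\Psi(X_{12})=x\otimes1$, $\Psi(X_{23})=y\otimes 1$, $\Psi(X_{31})=z\otimes 1$, $\Psi(X_{03})=y\otimes t+z\otimes(t-1)$, $\Psi(X_{01})=z\otimes t'+x\otimes(t'-1)$, $\Psi(X_{02})=x\otimes t''+y\otimes(t''-1)$. Finally $u_0=\tfrac14(z\otimes 1+x\otimes t''+y\otimes(t''-1))$, $u_1=\tfrac14(x\otimes 1+y\otimes t+z\otimes(t-1))$, $u_2=\tfrac14(y\otimes 1+z\otimes t'+x\otimes(t'-1))$. *)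

(* Defs.v *)
From HB Require Import structures.
From mathcomp Require Import all_boot all_order all_algebra.
Set Implicit Arguments. Unset Strict Implicit. Unset Printing Implicit Defensive.
Import Order.TTheory GRing.Theory Num.Theory.
Local Open Scope ring_scope.

Definition lie_gen (K : pzRingType) (V : lmodType K) (br : V -> V -> V)
  (S : V -> Prop) (v : V) : Prop :=
  forall P : V -> Prop,
    (forall w, S w -> P w) -> P 0 ->
    (forall (a : K) u w, P u -> P w -> P (a *: u + w)) ->
    (forall u w, P u -> P w -> P (br u w)) -> P v.

Definition is_lie_bracket (K : pzRingType) (V : lmodType K) (br : V -> V -> V) : Prop :=
  [/\ forall (a : K) u v w, br (a *: u + v) w = a *: br u w + br v w,
      forall (a : K) u v w, br w (a *: u + v) = a *: br w u + br w v,
      forall u, br u u = 0 &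
      forall u v w, br u (br v w) + br v (br w u) + br w (br u v) = 0].

Definition i0 : 'I_4 := @Ordinal 4 0 isT.
Definition i1 : 'I_4 := @Ordinal 4 1 isT.
Definition i2 : 'I_4 := @Ordinal 4 2 isT.
Definition i3 : 'I_4 := @Ordinal 4 3 isT.

Definition tetra_relations (K : pzRingType) (V : lmodType K) (br : V -> V -> V)
  (X : 'I_4 -> 'I_4 -> V) : Prop :=
  [/\ forall i j, i != j -> X i j + X j i = 0,
      forall i j l, i != j -> j != l -> i != l ->
        br (X i j) (X j l) = 2%:R *: (X i j + X j l) &
      forall h i j l, uniq [:: h; i; j; l] ->
        br (X h i) (br (X h i) (br (X h i) (X j l))) = 4%:R *: br (X h i) (X j l)].

Section Loop.
Variable k : fieldType.

Definition kt := {fraction {poly k}}.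
Definition kF (c : k) : kt := tofrac (c%:P).
Definition tt : kt := tofrac 'X.
Definition tt' : kt := 1 - tt^-1.
Definition tt'' : kt := (1 - tt)^-1.

(* A = k[t, t^-1, (1-t)^-1] as a subset of k(t) *)
Definition inA (f : kt) : Prop :=
  exists (p : {poly k}) (a b : nat), f = tofrac p / (tt ^+ a * (1 - tt) ^+ b).

Definition ev (p : {poly k}) (s : kt) : kt := (map_poly kF p).[s].

(* sl2(k) (x)_k A is identified with the traceless 2x2 matrices with entries in A,
   x (x) f corresponding to f *: x. *)
Definition inG (M : 'M[kt]_2) : Prop := \tr M = 0 /\ forall i j, inA (M i j).

Definition mx2 (a b c d : kt) : 'M[kt]_2 :=
  \matrix_(i < 2, j < 2)
    (if (i : nat) == 0%N then (if (j : nat) == 0%N then a else b)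
     else (if (j : nat) == 0%N then c else d)).

Definition xm : 'M[kt]_2 := mx2 (-1) 2%:R 0 1.
Definition ym : 'M[kt]_2 := mx2 (-1) 0 (- 2%:R) 1.
Definition zm : 'M[kt]_2 := mx2 1 0 0 (-1).

Definition u0 : 'M[kt]_2 := (4%:R)^-1 *: (zm + tt'' *: xm + (tt'' - 1) *: ym).
Definition u1 : 'M[kt]_2 := (4%:R)^-1 *: (xm + tt *: ym + (tt - 1) *: zm).
Definition u2 : 'M[kt]_2 := (4%:R)^-1 *: (ym + tt' *: zm + (tt' - 1) *: xm).

Definition lie_br (M N : 'M[kt]_2) : 'M[kt]_2 := M *m N - N *m M.

Definition sum3 (f0 f1 f2 s : kt) (M : 'M[kt]_2) : Prop :=
  exists p q r : {poly k},
    M = (f0 * ev p s) *: u0 + (f1 * ev q s) *: u1 + (f2 * ev r s) *: u2.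

Definition direct3 (f0 f1 f2 s : kt) : Prop :=
  forall p q r : {poly k},
    (f0 * ev p s) *: u0 + (f1 * ev q s) *: u1 + (f2 * ev r s) *: u2 = 0 ->
    [/\ (f0 * ev p s) *: u0 = 0, (f1 * ev q s) *: u1 = 0 & (f2 * ev r s) *: u2 = 0].

Definition is_direct_sum3 (S : 'M[kt]_2 -> Prop) (f0 f1 f2 s : kt) : Prop :=
  (forall M, S M <-> sum3 f0 f1 f2 s M) /\ direct3 f0 f1 f2 s.

Definition g_direct_sum (S1 S2 S3 : 'M[kt]_2 -> Prop) : Prop :=
  (forall M, inG M <-> exists a b c, [/\ S1 a, S2 b, S3 c & M = a + b + c]) /\
  (forall a b c, S1 a -> S2 b -> S3 c -> a + b + c = 0 -> [/\ a = 0, b = 0 & c = 0]).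

End Loop.

(* Main.v *)
Require Import Defs.
From HB Require Import structures.
From mathcomp Require Import all_boot all_order all_algebra.
From mathcomp Require Import ring zify.
Import GRing.Theory.
Local Open Scope ring_scope.
Set Implicit Arguments. Unset Strict Implicit. Unset Printing Implicit Defensive.

Section Gen.
Variable F : fieldType.
Variable t : F.
Hypothesis h2 : (2%:R : F) != 0.
Hypothesis h0 : t != 0.
Hypothesis h1 : 1 - t != 0.

Definition mx2F (a b c d : F) : 'M[F]_2 :=
  \matrix_(i < 2, j < 2)
    (if (i : nat) == 0%N then (if (j : nat) == 0%N then a else b)
     else (if (j : nat) == 0%N then c else d)).
Definition t'F : F := 1 - t^-1.
Definition t''F : F := (1 - t)^-1.
Definition xmF : 'M[F]_2 := mx2F (-1) 2%:R 0 1.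
Definition ymF : 'M[F]_2 := mx2F (-1) 0 (- 2%:R) 1.
Definition zmF : 'M[F]_2 := mx2F 1 0 0 (-1).
Definition u0F : 'M[F]_2 := (4%:R)^-1 *: (zmF + t''F *: xmF + (t''F - 1) *: ymF).
Definition u1F : 'M[F]_2 := (4%:R)^-1 *: (xmF + t *: ymF + (t - 1) *: zmF).
Definition u2F : 'M[F]_2 := (4%:R)^-1 *: (ymF + t'F *: zmF + (t'F - 1) *: xmF).
Definition lie_brF (M N : 'M[F]_2) : 'M[F]_2 := M *m N - N *m M.
Definition S3 (f0 f1 f2 x y z : F) : 'M[F]_2 :=
  (f0 * x) *: u0F + (f1 * y) *: u1F + (f2 * z) *: u2F.

Lemma h4 : (4%:R : F) != 0.
Proof. by rewrite (_ : 4%:R = 2%:R * 2%:R :> F) ?mulf_neq0 // -natrM. Qed.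

Lemma mx2E (M : 'M[F]_2) : M = mx2F (M 0 0) (M 0 1) (M 1 0) (M 1 1).
Proof.
apply/matrixP => i j; rewrite !mxE.
case: i => [[|[|i]] Hi]; case: j => [[|[|j]] Hj] //=; by congr (M _ _); apply: val_inj.
Qed.
Lemma mx2D (a b c d a' b' c' d' : F) :
  mx2F a b c d + mx2F a' b' c' d' = mx2F (a + a') (b + b') (c + c') (d + d').
Proof. by apply/matrixP => i j; rewrite !mxE; case: ifP; case: ifP. Qed.
Lemma mx2Z f (a b c d : F) :
  f *: mx2F a b c d = mx2F (f * a) (f * b) (f * c) (f * d).
Proof. by apply/matrixP => i j; rewrite !mxE; case: ifP; case: ifP. Qed.
Lemma mx2N (a b c d : F) : - mx2F a b c d = mx2F (- a) (- b) (- c) (- d).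
Proof. by apply/matrixP => i j; rewrite !mxE; case: ifP; case: ifP. Qed.
Lemma mx2_0 : 0 = mx2F 0 0 0 0.
Proof. by apply/matrixP => i j; rewrite !mxE; case: ifP; case: ifP. Qed.
Lemma mx2M (a b c d a' b' c' d' : F) :
  mx2F a b c d *m mx2F a' b' c' d' =
  mx2F (a * a' + b * c') (a * b' + b * d') (c * a' + d * c') (c * b' + d * d').
Proof.
apply/matrixP => i j; rewrite !mxE !big_ord_recl big_ord0 !mxE /=.
case: i => [[|[|]]] //= ?; case: j => [[|[|]]] //= ?; by rewrite addr0.
Qed.
Lemma lie_br2 (a b c d a' b' c' d' : F) :
  lie_brF (mx2F a b c d) (mx2F a' b' c' d') =
  mx2F (a * a' + b * c' - (a' * a + b' * c)) (a * b' + b * d' - (a' * b + b' * d))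
      (c * a' + d * c' - (c' * a + d' * c)) (c * b' + d * d' - (c' * b + d' * d)).
Proof. by rewrite /lie_brF !mx2M mx2N mx2D. Qed.
Lemma tr2 (a b c d : F) : \tr (mx2F a b c d) = a + d.
Proof. by rewrite /mxtrace !big_ord_recl big_ord0 !mxE /= addr0. Qed.
Lemma mx2_eq (a b c d a' b' c' d' : F) :
  mx2F a b c d = mx2F a' b' c' d' -> [/\ a = a', b = b', c = c' & d = d'].
Proof.
move=> E; have := congr1 (fun M : 'M[F]_2 => (M 0 0, M 0 1, M 1 0, M 1 1)) E.
by rewrite !mxE /= => -[].
Qed.
Lemma mx2_00 (a b c d : F) : mx2F a b c d 0 0 = a. Proof. by rewrite mxE. Qed.
Lemma mx2_01 (a b c d : F) : mx2F a b c d 0 1 = b. Proof. by rewrite mxE. Qed.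
Lemma mx2_10 (a b c d : F) : mx2F a b c d 1 0 = c. Proof. by rewrite mxE. Qed.
Lemma mx2_11 (a b c d : F) : mx2F a b c d 1 1 = d. Proof. by rewrite mxE. Qed.

Lemma u0E : u0F = mx2F (2%:R^-1 * (1 - (1 - t)^-1)) (2%:R^-1 * (1 - t)^-1)
                      (2%:R^-1 * (1 - (1 - t)^-1)) (2%:R^-1 * ((1 - t)^-1 - 1)).
Proof.
rewrite /u0F /xmF /ymF /zmF /t''F !mx2Z !mx2D mx2Z.
by congr mx2F; field; rewrite ?h2 ?h4 ?h1.
Qed.
Lemma u1E : u1F = mx2F (- 2%:R^-1) (2%:R^-1) (- 2%:R^-1 * t) (2%:R^-1).
Proof.
rewrite /u1F /xmF /ymF /zmF !mx2Z !mx2D mx2Z.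
by congr mx2F; field; rewrite ?h2 ?h4 ?h1.
Qed.
Lemma u2E : u2F = mx2F 0 (- 2%:R^-1 * t^-1) (- 2%:R^-1) 0.
Proof.
rewrite /u2F /xmF /ymF /zmF /t'F !mx2Z !mx2D mx2Z.
by congr mx2F; field; rewrite ?h2 ?h4 ?h1 ?h0.
Qed.


Lemma S3E f0 f1 f2 x y z : S3 f0 f1 f2 x y z =
  mx2F ((f0 * x) * (2%:R^-1 * (1 - (1 - t)^-1)) + (f1 * y) * (- 2%:R^-1) + (f2 * z) * 0)
       ((f0 * x) * (2%:R^-1 * (1 - t)^-1) + (f1 * y) * (2%:R^-1) + (f2 * z) * (- 2%:R^-1 * t^-1))
       ((f0 * x) * (2%:R^-1 * (1 - (1 - t)^-1)) + (f1 * y) * (- 2%:R^-1 * t) + (f2 * z) * (- 2%:R^-1))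
       ((f0 * x) * (2%:R^-1 * ((1 - t)^-1 - 1)) + (f1 * y) * (2%:R^-1) + (f2 * z) * 0).
Proof. by rewrite /S3 u0E u1E u2E !mx2Z !mx2D. Qed.

Definition CO x y z := S3 (t - 1) 1 t x y z.
Definition CO' x y z := S3 t'F (t'F - 1) 1 z x y.
Definition CO'' x y z := S3 1 t''F (t''F - 1) y z x.

Lemma brO x y z x' y' z' :
  lie_brF (CO x y z) (CO x' y' z') =
  CO (-(y*z' - z*y')) (t*(z*x' - x*z')) (-(t-1)*(x*y'-y*x')).
Proof.
rewrite /CO !S3E lie_br2; congr mx2F; field; by rewrite ?h2 ?h4 ?h1 ?h0.
Qed.
Lemma brO' x y z x' y' z' :
  lie_brF (CO' x y z) (CO' x' y' z') =
  CO' (-(y*z' - z*y')) (t'F*(z*x' - x*z')) (-(t'F-1)*(x*y'-y*x')).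
Proof.
rewrite /CO' /t'F !S3E lie_br2; congr mx2F; field; by rewrite ?h2 ?h4 ?h1 ?h0.
Qed.
Lemma brO'' x y z x' y' z' :
  lie_brF (CO'' x y z) (CO'' x' y' z') =
  CO'' (-(y*z' - z*y')) (t''F*(z*x' - x*z')) (-(t''F-1)*(x*y'-y*x')).
Proof.
rewrite /CO'' /t''F !S3E lie_br2; congr mx2F; field; by rewrite ?h2 ?h4 ?h1 ?h0.
Qed.

Lemma genO1 : xmF = CO 0 2%:R (- 2%:R).
Proof. rewrite /CO S3E /xmF; congr mx2F; field; by rewrite ?h2 ?h4 ?h1 ?h0. Qed.
Lemma genO2 : t *: ymF + (t - 1) *: zmF = CO 0 2%:R 2%:R.
Proof. rewrite /CO S3E /ymF /zmF !mx2Z mx2D; congr mx2F; field; by rewrite ?h2 ?h4 ?h1 ?h0. Qed.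
Lemma genO'1 : ymF = CO' 0 2%:R (- 2%:R).
Proof. rewrite /CO' /t'F S3E /ymF; congr mx2F; field; by rewrite ?h2 ?h4 ?h1 ?h0. Qed.
Lemma genO'2 : t'F *: zmF + (t'F - 1) *: xmF = CO' 0 2%:R 2%:R.
Proof. rewrite /CO' /t'F S3E /xmF /zmF !mx2Z mx2D; congr mx2F; field; by rewrite ?h2 ?h4 ?h1 ?h0. Qed.
Lemma genO''1 : zmF = CO'' 0 2%:R (- 2%:R).
Proof. rewrite /CO'' /t''F S3E /zmF; congr mx2F; field; by rewrite ?h2 ?h4 ?h1 ?h0. Qed.
Lemma genO''2 : t''F *: xmF + (t''F - 1) *: ymF = CO'' 0 2%:R 2%:R.
Proof. rewrite /CO'' /t''F S3E /xmF /ymF !mx2Z mx2D; congr mx2F; field; by rewrite ?h2 ?h4 ?h1 ?h0. Qed.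

Lemma S3lin f0 f1 f2 (l x y z x' y' z' : F) :
  l *: S3 f0 f1 f2 x y z + S3 f0 f1 f2 x' y' z' =
  S3 f0 f1 f2 (l * x + x') (l * y + y') (l * z + z').
Proof. rewrite !S3E mx2Z mx2D; congr mx2F; ring. Qed.
Lemma S30 f0 f1 f2 : S3 f0 f1 f2 0 0 0 = 0.
Proof. rewrite S3E mx2_0; congr mx2F; ring. Qed.
Lemma S3tr f0 f1 f2 x y z : \tr (S3 f0 f1 f2 x y z) = 0.
Proof. rewrite S3E tr2; field; by rewrite ?h2 ?h4 ?h1 ?h0. Qed.

Definition cA (M : 'M[F]_2) := M 0 1 + 2%:R * M 0 0 - M 1 0 / t.
Definition cB (M : 'M[F]_2) := cA M * (1 - t''F) - 2%:R * M 0 0.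
Definition cC (M : 'M[F]_2) := - cA M * t + 2%:R * t * M 0 0 - 2%:R * M 1 0.

Lemma S3coef x y z :
  [/\ x = cA (S3 1 1 1 x y z), y = cB (S3 1 1 1 x y z) & z = cC (S3 1 1 1 x y z)].
Proof.
rewrite /cB /cC /cA /t''F S3E !mx2_00 !mx2_01 !mx2_10.
split; field; by rewrite ?h2 ?h4 ?h1 ?h0.
Qed.
Lemma S3decomp (M : 'M[F]_2) : \tr M = 0 -> M = S3 1 1 1 (cA M) (cB M) (cC M).
Proof.
rewrite {1}[M]mx2E tr2 => tr0.
have E : M 1 1 = - M 0 0 by apply/eqP; rewrite -addr_eq0 addrC tr0.
rewrite {1}[M]mx2E S3E /cB /cC /cA /t''F E.
congr mx2F; field; by rewrite ?h2 ?h4 ?h1 ?h0.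
Qed.
End Gen.



Section EvF.
Variables (k F : fieldType) (phi : {rmorphism k -> F}).
Definition evF (p : {poly k}) (x : F) := (map_poly phi p).[x].
Lemma evFD p q x : evF (p + q) x = evF p x + evF q x.
Proof. by rewrite /evF rmorphD hornerD. Qed.
Lemma evFM p q x : evF (p * q) x = evF p x * evF q x.
Proof. by rewrite /evF rmorphM hornerM. Qed.
Lemma evFN p x : evF (- p) x = - evF p x.
Proof. by rewrite /evF rmorphN hornerN. Qed.
Lemma evFB p q x : evF (p - q) x = evF p x - evF q x.
Proof. by rewrite evFD evFN. Qed.
Lemma evFC c x : evF c%:P x = phi c.
Proof. by rewrite /evF map_polyC hornerC. Qed.
Lemma evFX x : evF 'X x = x.
Proof. by rewrite /evF map_polyX hornerX. Qed.
Lemma evF0 x : evF 0 x = 0.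
Proof. by rewrite -[0]/(0%:P : {poly k}) evFC rmorph0. Qed.
Lemma evF1 x : evF 1 x = 1.
Proof. by rewrite -[1]/(1%:P : {poly k}) evFC rmorph1. Qed.

Definition evFE := (evFN, evFB, evFM, evFX, evF1, evFD, evF0, evFC).

Lemma evFXn n x : evF ('X^n) x = x ^+ n.
Proof. by rewrite /evF map_polyXn hornerXn. Qed.
Lemma evFexp p n x : evF (p ^+ n) x = evF p x ^+ n.
Proof. by elim: n => [|n IH]; rewrite ?expr0 ?evF1 // !exprS evFM IH. Qed.
Lemma evFZ c p x : evF (c *: p) x = phi c * evF p x.
Proof. by rewrite -mul_polyC evFM evFC. Qed.
Lemma evF_mulXC p c x : evF (p * 'X + c%:P) x = evF p x * x + phi c.
Proof. by rewrite evFD evFM evFX evFC. Qed.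
End EvF.

Section LiePart.
Variables (k F : fieldType) (phi : {rmorphism k -> F}).
Hypothesis hk : (2%:R : k) != 0.
Variables (L : lmodType k) (br : L -> L -> L) (psi : L -> 'M[F]_2).
Hypothesis psi_lin : forall (a : k) u v, psi (a *: u + v) = phi a *: psi u + psi v.
Hypothesis psi_br : forall u v, psi (br u v) = lie_brF (psi u) (psi v).
Variables (C : F -> F -> F -> 'M[F]_2) (s : F).
Hypothesis HCl : forall l x y z x' y' z',
  l *: C x y z + C x' y' z' = C (l * x + x') (l * y + y') (l * z + z').
Hypothesis HC0 : C 0 0 0 = 0.
Hypothesis HCb : forall x y z x' y' z',
  lie_brF (C x y z) (C x' y' z') =
  C (-(y*z' - z*y')) (s*(z*x' - x*z')) (-(s-1)*(x*y'-y*x')).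
Variables (g1 g2 : L).
Hypothesis Hg1 : psi g1 = C 0 2%:R (- 2%:R).
Hypothesis Hg2 : psi g2 = C 0 2%:R 2%:R.
Local Notation evF := (evF phi).

Let psi0 : psi 0 = 0.
Proof.
have := psi_lin 1 0 0; rewrite scaler0 addr0 rmorph1 scale1r => E.
by apply: (addrI (psi 0)); rewrite addr0 -E.
Qed.

Let CZ l x y z : l *: C x y z = C (l * x) (l * y) (l * z).
Proof. by have := HCl l x y z 0 0 0; rewrite HC0 !addr0. Qed.
Let CD x y z x' y' z' : C x y z + C x' y' z' = C (x + x') (y + y') (z + z').
Proof. by have := HCl 1 x y z x' y' z'; rewrite scale1r !mul1r. Qed.

Definition Gset := fun w => w = g1 \/ w = g2.
Definition Qm (M : 'M[F]_2) := exists v, lie_gen br Gset v /\ M = psi v.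
Definition Sm (M : 'M[F]_2) := exists p q r, M = C (evF p s) (evF q s) (evF r s).

Lemma Sm_of_lie v : lie_gen br Gset v -> Sm (psi v).
Proof.
move=> H; apply: (H (fun v => Sm (psi v))).
- move=> w [->|->]; [rewrite Hg1|rewrite Hg2].
  + exists 0, (2%:R)%:P, (- 2%:R)%:P.
    by rewrite evF0 !evFC rmorphN rmorph_nat.
  + exists 0, (2%:R)%:P, (2%:R)%:P.
    by rewrite evF0 !evFC rmorph_nat.
- by exists 0, 0, 0; rewrite psi0 evF0 HC0.
- move=> a u w [p [q [r Hu]]] [p' [q' [r' Hw]]].
  exists (a%:P * p + p'), (a%:P * q + q'), (a%:P * r + r').
  by rewrite psi_lin Hu Hw HCl !evFD !evFM !evFC.
- move=> u w [p [q [r Hu]]] [p' [q' [r' Hw]]].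
  exists (-(q * r' - r * q')), ('X * (r * p' - p * r')), (-('X - 1) * (p * q' - q * p')).
  by rewrite psi_br Hu Hw HCb !evFE.
Qed.

Lemma lie_gen_S w : Gset w -> lie_gen br Gset w.
Proof. by move=> Hw P HS _ _ _; apply: HS. Qed.
Lemma lie_gen_lin a u w : lie_gen br Gset u -> lie_gen br Gset w ->
  lie_gen br Gset (a *: u + w).
Proof. move=> Hu Hw P HS H0 Hl Hb; apply Hl; [exact: (Hu P HS H0 Hl Hb) | exact: (Hw P HS H0 Hl Hb)]. Qed.
Lemma lie_gen_br u w : lie_gen br Gset u -> lie_gen br Gset w ->
  lie_gen br Gset (br u w).
Proof. move=> Hu Hw P HS H0 Hl Hb; apply Hb; [exact: (Hu P HS H0 Hl Hb) | exact: (Hw P HS H0 Hl Hb)]. Qed.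
Lemma lie_gen_0 : lie_gen br Gset 0.
Proof. by move=> P HS H0 Hl Hb. Qed.

Lemma Qlin a M N : Qm M -> Qm N -> Qm (phi a *: M + N).
Proof.
move=> [u [Hu ->]] [w [Hw ->]]; exists (a *: u + w).
by split; [apply: lie_gen_lin | rewrite psi_lin].
Qed.
Lemma Qbr M N : Qm M -> Qm N -> Qm (lie_brF M N).
Proof.
move=> [u [Hu ->]] [w [Hw ->]]; exists (br u w).
by split; [apply: lie_gen_br | rewrite psi_br].
Qed.
Lemma Q0 : Qm 0.
Proof. by exists 0; split; [apply: lie_gen_0 | rewrite psi0]. Qed.
Lemma QZ a M : Qm M -> Qm (phi a *: M).
Proof. by move=> HM; have := Qlin a HM Q0; rewrite addr0. Qed.
Lemma QD M N : Qm M -> Qm N -> Qm (M + N).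
Proof. by move=> HM HN; have := Qlin 1 HM HN; rewrite rmorph1 scale1r. Qed.
Lemma Qeq x y z x' y' z' : Qm (C x y z) -> x = x' -> y = y' -> z = z' -> Qm (C x' y' z').
Proof. by move=> H <- <- <-. Qed.

Let phi2 : phi 2%:R = 2%:R. Proof. by rewrite rmorph_nat. Qed.
Let h2F : (2%:R : F) != 0.
Proof. by rewrite -phi2 fmorph_eq0. Qed.

Lemma Qb : Qm (C 0 1 0).
Proof.
have Q1 : Qm (C 0 2%:R (- 2%:R)) by rewrite -Hg1; exists g1; split => //; apply: lie_gen_S; left.
have Q2 : Qm (C 0 2%:R 2%:R) by rewrite -Hg2; exists g2; split => //; apply: lie_gen_S; right.
have := QD (QZ (2%:R^-1 * 2%:R^-1) Q1) (QZ (2%:R^-1 * 2%:R^-1) Q2).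
rewrite !CZ CD rmorphM fmorphV phi2 => H; apply: (Qeq H).
- by rewrite !mulr0 addr0.
- by field.
- by field.
Qed.
Lemma Qc : Qm (C 0 0 1).
Proof.
have Q1 : Qm (C 0 2%:R (- 2%:R)) by rewrite -Hg1; exists g1; split => //; apply: lie_gen_S; left.
have Q2 : Qm (C 0 2%:R 2%:R) by rewrite -Hg2; exists g2; split => //; apply: lie_gen_S; right.
have := QD (QZ (- (2%:R^-1 * 2%:R^-1)) Q1) (QZ (2%:R^-1 * 2%:R^-1) Q2).
rewrite !CZ CD rmorphN rmorphM fmorphV phi2 => H; apply: (Qeq H).
- by rewrite !mulr0 addr0.
- by field.
- by field.
Qed.
Lemma Qa : Qm (C 1 0 0).
Proof.
have := QZ (-1) (Qbr Qb Qc); rewrite HCb CZ rmorphN rmorph1 => H; apply: (Qeq H); ring.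
Qed.

Definition good f := [/\ Qm (C f 0 0), Qm (C 0 f 0) & Qm (C 0 0 f)].

Lemma good1 : good 1.
Proof. by split; [apply: Qa | apply: Qb | apply: Qc]. Qed.
Lemma good0 : good 0.
Proof. by split; rewrite HC0; apply: Q0. Qed.
Lemma good_lin a f g : good f -> good g -> good (phi a * f + g).
Proof.
move=> [f1 f2 f3] [g1' g2' g3']; split.
- by have := Qlin a f1 g1'; rewrite HCl !mulr0 !addr0.
- by have := Qlin a f2 g2'; rewrite HCl !mulr0 !addr0.
- by have := Qlin a f3 g3'; rewrite HCl !mulr0 !addr0.
Qed.
Lemma good_s f : good f -> good (s * f).
Proof.
move=> [f1 f2 f3].
have B : Qm (C 0 (s * f) 0).
  by have := Qbr Qc f1; rewrite HCb => H; apply: (Qeq H); ring.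
split => //.
- have := QZ (-1) (Qbr B Qc); rewrite HCb CZ rmorphN rmorph1 => H; apply: (Qeq H); ring.
- have := QD (QZ (-1) (Qbr f1 Qb)) f3; rewrite HCb CZ CD rmorphN rmorph1 => H; apply: (Qeq H); ring.
Qed.
Lemma good_ev p : good (evF p s).
Proof.
elim/poly_ind: p => [|p c IH]; first by rewrite evF0; apply: good0.
have := good_lin 1 (good_s IH) (good_lin c good1 good0).
by rewrite evFD evFM evFX evFC rmorph1 mul1r mulr1 addr0 mulrC.
Qed.

Lemma Qm_Sm M : Qm M <-> Sm M.
Proof.
split.
- by move=> [v [Hv ->]]; apply: Sm_of_lie.
- move=> [p [q [r ->]]].
  have [A1 _ _] := good_ev p; have [_ B1 _] := good_ev q; have [_ _ C1] := good_ev r.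
  by have := QD (QD A1 B1) C1; rewrite !CD !addr0 !add0r.
Qed.
End LiePart.

Section Decomp.
Variables (k F : fieldType) (phi : {rmorphism k -> F}) (t : F).
Hypothesis Htr : forall p, evF phi p t = 0 -> p = 0.
Hypothesis h2F : (2%:R : F) != 0.
Local Notation evF := (evF phi).
Local Notation t' := (t'F t).
Local Notation t'' := (t''F t).

Lemma t_nz : t != 0.
Proof.
apply/eqP => E; have := @Htr 'X; rewrite evFX E => /(_ erefl) /eqP.
by rewrite polyX_eq0.
Qed.
Lemma omt_nz : 1 - t != 0.
Proof.
apply/eqP => E; have := @Htr (1 - 'X); rewrite evFB evF1 evFX E => /(_ erefl) /eqP.
rewrite subr_eq0 => /eqP /(congr1 (fun p : {poly k} => size p)).
by rewrite size_polyX size_poly1.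
Qed.
Lemma tm1_nz : t - 1 != 0.
Proof. by rewrite -opprB oppr_eq0 omt_nz. Qed.

Definition inAF f := exists p a b, f = evF p t / (t ^+ a * (1 - t) ^+ b).

Lemma inAF_ev p : inAF (evF p t).
Proof. by exists p, 0%N, 0%N; rewrite !expr0 mulr1 invr1 mulr1. Qed.
Lemma inAF_phi c : inAF (phi c).
Proof. by rewrite -(evFC phi c t); apply: inAF_ev. Qed.

Lemma frac_add (P Q T U T' U' : F) : T != 0 -> U != 0 -> T' != 0 -> U' != 0 ->
  P / (T * U) + Q / (T' * U') = (P * T' * U' + Q * T * U) / ((T * T') * (U * U')).
Proof. by move=> *; field; do ?[apply/andP; split] => //. Qed.
Lemma frac_mul (P Q T U T' U' : F) : T != 0 -> U != 0 -> T' != 0 -> U' != 0 ->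
  P / (T * U) * (Q / (T' * U')) = (P * Q) / ((T * T') * (U * U')).
Proof. by move=> *; field; do ?[apply/andP; split] => //. Qed.

Lemma inAF_add f g : inAF f -> inAF g -> inAF (f + g).
Proof.
move=> [p [a [b ->]]] [q [c [d ->]]].
exists (p * 'X^c * (1 - 'X) ^+ d + q * 'X^a * (1 - 'X) ^+ b), (a + c)%N, (b + d)%N.
rewrite frac_add ?expf_neq0 ?t_nz ?omt_nz // !exprD.
by rewrite evFD !evFM !evFexp ?evFXn evFB evF1 evFX.
Qed.
Lemma inAF_mul f g : inAF f -> inAF g -> inAF (f * g).
Proof.
move=> [p [a [b ->]]] [q [c [d ->]]].
exists (p * q), (a + c)%N, (b + d)%N.
by rewrite frac_mul ?expf_neq0 ?t_nz ?omt_nz // !exprD evFM.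
Qed.
Lemma inAF_opp f : inAF f -> inAF (- f).
Proof. by move=> H; rewrite -mulN1r -(rmorph1 phi) -rmorphN; apply: inAF_mul (inAF_phi _) H. Qed.
Lemma inAF_tinv : inAF t^-1.
Proof. by exists 1, 1%N, 0%N; rewrite evF1 expr1 expr0 mulr1 mul1r. Qed.
Lemma inAF_omtinv : inAF (1 - t)^-1.
Proof. by exists 1, 0%N, 1%N; rewrite evF1 expr1 expr0 !mul1r. Qed.
Lemma inAF_evs s p : inAF s -> inAF (evF p s).
Proof.
move=> Hs; elim/poly_ind: p => [|p c IH]; first by rewrite evF0 -(evF0 phi t); apply: inAF_ev.
by rewrite evF_mulXC; apply: inAF_add (inAF_mul IH Hs) (inAF_phi c).
Qed.

Lemma shift s c p : exists q d, evF p s = (s - phi c) * evF q s + phi d.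
Proof.
elim/poly_ind: p => [|p c' [q [d IH]]].
  by exists 0, 0; rewrite evF0 rmorph0 mulr0 addr0.
exists (q * 'X + d%:P), (c * d + c'); rewrite !evF_mulXC IH rmorphD rmorphM; ring.
Qed.
Lemma sub z w : (exists q, z = evF q w) -> forall p, exists q, evF p z = evF q w.
Proof.
move=> [q ->]; elim/poly_ind => [|p c [q1 IH]].
  by exists 0; rewrite !evF0.
by exists (q1 * q + c%:P); rewrite evF_mulXC IH evFD evFM evFC.
Qed.

Lemma PF_a a p : exists P Q, evF p t / t ^+ a = evF P t + evF Q t^-1.
Proof.
elim: a p => [|a IH] p; first by exists p, 0; rewrite expr0 divr1 evF0 addr0.
have [q [d E]] := shift t 0 p; rewrite rmorph0 subr0 in E.
have [P [Q E']] := IH q.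
exists P, (Q + d%:P * 'X^(a.+1)); rewrite evFD evFM evFC evFXn E addrA -E' exprVn exprS.
have ha : t ^+ a != 0 by rewrite expf_neq0 ?t_nz.
have h := t_nz; field; by rewrite ha h.
Qed.
Lemma PF_b b p : exists P R, evF p t / (1 - t) ^+ b = evF P t + evF R (1 - t)^-1.
Proof.
elim: b p => [|b IH] p; first by exists p, 0; rewrite expr0 divr1 evF0 addr0.
have [q [d E]] := shift t 1 p; rewrite rmorph1 in E.
have [P [R E']] := IH (- q).
exists P, (R + d%:P * 'X^(b.+1)); rewrite evFD evFM evFC evFXn E addrA -E' exprVn exprS evFN.
have hb : (1 - t) ^+ b != 0 by rewrite expf_neq0 ?omt_nz.
have h := omt_nz; field; by rewrite hb h.
Qed.
Lemma PF a b p : exists P Q R,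
  evF p t / (t ^+ a * (1 - t) ^+ b) = evF P t + evF Q t^-1 + evF R (1 - t)^-1.
Proof.
elim: a b p => [|a IHa] b p.
  by have [P [R E]] := PF_b b p; exists P, 0, R; rewrite expr0 mul1r E evF0 addr0.
elim: b p => [|b IHb] p.
  by have [P [Q E]] := PF_a a.+1 p; exists P, Q, 0; rewrite expr0 mulr1 E evF0 addr0.
have [P1 [Q1 [R1 E1]]] := IHa b.+1 p.
have [P2 [Q2 [R2 E2]]] := IHb p.
exists (P1 + P2), (Q1 + Q2), (R1 + R2); rewrite !evFD.
have -> : evF p t / (t ^+ a.+1 * (1 - t) ^+ b.+1) =
   evF p t / (t ^+ a * (1 - t) ^+ b.+1) + evF p t / (t ^+ a.+1 * (1 - t) ^+ b).
  have ha : t ^+ a != 0 by rewrite expf_neq0 ?t_nz.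
  have hb : (1 - t) ^+ b != 0 by rewrite expf_neq0 ?omt_nz.
  have h := t_nz; have h' := omt_nz.
  rewrite !exprS; field; by rewrite ha hb h h'.
rewrite E1 E2; ring.
Qed.

Lemma ev_inj p q : evF p t = evF q t -> p = q.
Proof. by move=> E; apply/eqP; rewrite -subr_eq0; apply/eqP; apply: Htr; rewrite evFB E subrr. Qed.

Lemma tinv_t' : exists q, t^-1 = evF q t'.
Proof. by exists (1 - 'X); rewrite evFB evF1 evFX /t'F opprB addrC subrK. Qed.

Lemma shapeA f : inAF f ->
  exists P Q R, f = (t - 1) * evF P t + t' * evF Q t' + 1 * evF R t''.
Proof.
move=> [p [a [b ->]]]; have [P [Q [R ->]]] := PF a b p.
have [P0 [d1 E1]] := shift t 1 P.
have [Q' E2] := sub tinv_t' Q.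
have [Q0 [d2 E3]] := shift t' 0 Q'.
exists P0, Q0, (R + (d1 + d2)%:P).
rewrite E1 E2 E3 evFD evFC rmorphD rmorph1 rmorph0 subr0 /t''F; ring.
Qed.
Lemma shapeB f : inAF f ->
  exists P Q R, f = 1 * evF P t + (t' - 1) * evF Q t' + t'' * evF R t''.
Proof.
move=> [p [a [b ->]]]; have [P [Q [R ->]]] := PF a b p.
have [Q' E2] := sub tinv_t' Q.
have [Q1 [d1 E3]] := shift t' 1 Q'.
have [R1 [d2 E4]] := shift t'' 0 R.
exists (P + (d1 + d2)%:P), Q1, R1.
rewrite -/(t''F t) E2 E3 E4 evFD evFC rmorphD rmorph1 rmorph0 subr0; ring.
Qed.
Lemma shapeC f : inAF f ->
  exists P Q R, f = t * evF P t + 1 * evF Q t' + (t'' - 1) * evF R t''.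
Proof.
move=> [p [a [b ->]]]; have [P [Q [R ->]]] := PF a b p.
have [P2 [d1 E1]] := shift t 0 P.
have [Q' E2] := sub tinv_t' Q.
have [R2 [d2 E4]] := shift t'' 1 R.
exists P2, (Q' + (d1 + d2)%:P), R2.
rewrite -/(t''F t) E1 E2 E4 evFD evFC rmorphD rmorph1 rmorph0 subr0; ring.
Qed.

Lemma hom (s D : F) (N Dp : {poly k}) : s * D = evF N t -> D = evF Dp t ->
  (size N <= 2)%N -> (size Dp <= 2)%N ->
  forall p, exists n (H : {poly k}), (size H <= n.+1)%N /\ evF p s * D ^+ n = evF H t.
Proof.
move=> EN ED sN sD; elim/poly_ind => [|p c [n [H [sH EH]]]].
  by exists 0%N, 0; rewrite size_poly0 !evF0 mul0r.
exists n.+1, (H * N + c%:P * Dp ^+ n.+1); split.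
  apply: leq_trans (size_polyD _ _) _; rewrite geq_max; apply/andP; split.
    apply: leq_trans (size_polyMleq _ _) _.
    move: sH sN; case: (size H) => [|a]; case: (size N) => [|b] //=; lia.
  rewrite mul_polyC; apply: leq_trans (size_scale_leq _ _) _.
  apply: leq_trans (size_poly_exp_leq _ _) _.
  move: sD; case: (size Dp) => [|[|[|b]]] //= _; lia.
rewrite evF_mulXC evFD !evFM evFC evFexp -EH -EN -ED exprS; ring.
Qed.

Lemma X_Xm1_coprime m n : coprimep ('X^m : {poly k}) (('X - 1%:P) ^+ n).
Proof.
apply: coprimep_expl; apply: coprimep_expr.
have := @coprimep_XsubC2 k 0 1; rewrite subr0 oner_neq0 polyC0 subr0; apply.
by [].
Qed.

Lemma dvd_small (d p : {poly k}) : d %| p -> (size p <= size d)%N -> exists c, p = c *: d.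
Proof.
case: (eqVneq p 0) => [->|pn0]; first by exists 0; rewrite scale0r.
move=> dv sz; have sz' := dvdp_leq pn0 dv.
have : d %= p by rewrite -dvdp_size_eqp // eqn_leq sz sz'.
by rewrite eqp_sym => /eqpf_eq [c _ ->]; exists c.
Qed.

Lemma Key0 (T1 T2 T3 : F) H1 H2 H3 m n :
  T1 = evF H1 t -> T2 * t ^+ m = evF H2 t -> (size H2 <= m.+1)%N ->
  T3 * (t - 1) ^+ n = evF H3 t -> (size H3 <= n.+1)%N ->
  T1 + T2 + T3 = 0 -> exists c2 c3, T2 = phi c2 /\ T3 = phi c3.
Proof.
move=> E1 E2 s2 E3 s3 Es.
have Xm1 : evF ('X - 1%:P) t = t - 1 by rewrite evFB evFX evFC rmorph1.
have P2 : H2 * ('X - 1%:P) ^+ n = 'X^m * (- (H1 * ('X - 1%:P) ^+ n + H3)).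
  apply: ev_inj; rewrite !evFM evFN evFD !evFM !evFexp ?evFXn ?evFX Xm1 -E1 -E3 -E2.
  have -> : T2 = - T1 - T3 by apply/eqP; rewrite -subr_eq0 -Es; apply/eqP; ring.
  ring.
have P3 : H3 * 'X^m = ('X - 1%:P) ^+ n * (- (H1 * 'X^m + H2)).
  apply: ev_inj; rewrite !evFM evFN evFD !evFM !evFexp ?evFXn ?evFX Xm1 -E1 -E3 -E2.
  have -> : T3 = - T1 - T2 by apply/eqP; rewrite -subr_eq0 -Es; apply/eqP; ring.
  ring.
have d2 : 'X^m %| H2.
  by rewrite -(Gauss_dvdpl _ (X_Xm1_coprime m n)) P2 dvdp_mulIl.
have d3 : ('X - 1%:P) ^+ n %| H3.
  have cop : coprimep (('X - 1%:P) ^+ n) ('X^m : {poly k}).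
    apply: coprimep_expl; apply: coprimep_expr.
    have := @coprimep_XsubC2 k 1 0; rewrite sub0r oppr_eq0 oner_neq0 polyC0 subr0; apply.
    by [].
  by rewrite -(Gauss_dvdpl _ cop) P3 dvdp_mulIl.
have [c2 e2] : exists c, H2 = c *: (polyX k ^+ m).
  by apply: dvd_small d2 _; rewrite size_polyXn.
have [c3 e3] : exists c, H3 = c *: ((polyX k - 1%:P) ^+ n).
  by apply: dvd_small d3 _; rewrite size_exp_XsubC.
exists c2, c3; split.
- apply: (mulIf (expf_neq0 m t_nz)); by rewrite E2 e2 evFZ ?evFXn ?evFexp ?evFX.
- apply: (mulIf (expf_neq0 n tm1_nz)); by rewrite E3 e3 evFZ evFexp Xm1.
Qed.

Lemma Xm1E : evF ('X - 1%:P) t = t - 1.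
Proof. by rewrite evFB evFX evFC rmorph1. Qed.

Lemma hom_t' Q : exists n (H : {poly k}), (size H <= n.+1)%N /\ evF Q t' * t ^+ n = evF H t.
Proof.
apply: (@hom t' t ('X - 1%:P) 'X).
- rewrite Xm1E /t'F; have h := t_nz; field; by rewrite h.
- by rewrite evFX.
- by rewrite size_XsubC.
- by rewrite size_polyX.
Qed.
Lemma hom_t'' R : exists n (H : {poly k}), (size H <= n.+1)%N /\ evF R t'' * (t - 1) ^+ n = evF H t.
Proof.
apply: (@hom t'' (t - 1) (- 1%:P) ('X - 1%:P)).
- rewrite evFN evFC rmorph1 /t''F; have h := omt_nz; field; by rewrite h.
- by rewrite Xm1E.
- by rewrite size_polyN size_polyC oner_neq0.
- by rewrite size_XsubC.
Qed.

Lemma solve3 (T1 T2 T3 : F) : T1 + T2 + T3 = 0 -> T2 = 0 -> T3 = 0 -> T1 = 0.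
Proof. by move=> E e2 e3; rewrite e2 e3 !addr0 in E. Qed.

Lemma coef_top (H : {poly k}) n : (size H <= n)%N -> H`_n = 0.
Proof. by move=> sH; rewrite nth_default. Qed.

Lemma uniqA P Q R :
  (t - 1) * evF P t + t' * evF Q t' + 1 * evF R t'' = 0 ->
  [/\ (t - 1) * evF P t = 0, t' * evF Q t' = 0 & 1 * evF R t'' = 0].
Proof.
move=> Es.
have [n [H [sH EH]]] := hom_t' Q.
have [n3 [H3 [sH3 EH3]]] := hom_t'' R.
have E1 : (t - 1) * evF P t = evF (('X - 1%:P) * P) t by rewrite evFM Xm1E.
have E2 : t' * evF Q t' * t ^+ n.+1 = evF (('X - 1%:P) * H) t.
  rewrite evFM Xm1E -EH /t'F exprS; have h := t_nz; field; by rewrite h.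
have s2 : (size (('X - 1%:P) * H)%R <= n.+2)%N.
  apply: leq_trans (size_polyMleq _ _) _; by rewrite size_XsubC natn add2n /= ltnS.
have E3 : 1 * evF R t'' * (t - 1) ^+ n3 = evF H3 t by rewrite mul1r.
have [c2 [c3 [e2 e3]]] := Key0 E1 E2 s2 E3 sH3 Es.
have e1 : (t - 1) * evF P t = phi (- (c2 + c3)).
  by rewrite rmorphN rmorphD -e2 -e3; apply/eqP; rewrite -subr_eq0 -Es; apply/eqP; ring.
have c1_0 : - (c2 + c3) = 0.
  have : ('X - 1%:P) * P = (- (c2 + c3))%:P by apply: ev_inj; rewrite -E1 evFC e1.
  by move/(congr1 (fun q => q.[1])); rewrite hornerM hornerXsubC subrr mul0r hornerC.
have c2_0 : c2 = 0.
  have : ('X - 1%:P) * H = c2 *: 'X^(n.+1).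
    by apply: ev_inj; rewrite -E2 e2 evFZ ?evFXn ?evFexp ?evFX.
  by move/(congr1 (fun q => q.[1])); rewrite hornerM hornerXsubC subrr mul0r hornerZ hornerXn expr1n mulr1.
have T1_0 : (t - 1) * evF P t = 0 by rewrite e1 c1_0 rmorph0.
have T2_0 : t' * evF Q t' = 0 by rewrite e2 c2_0 rmorph0.
by split => //; move: Es; rewrite T1_0 T2_0 !add0r.
Qed.

Lemma uniqB P Q R :
  1 * evF P t + (t' - 1) * evF Q t' + t'' * evF R t'' = 0 ->
  [/\ 1 * evF P t = 0, (t' - 1) * evF Q t' = 0 & t'' * evF R t'' = 0].
Proof.
move=> Es.
have [n [H [sH EH]]] := hom_t' Q.
have [n3 [H3 [sH3 EH3]]] := hom_t'' R.
have E1 : 1 * evF P t = evF P t by rewrite mul1r.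
have E2 : (t' - 1) * evF Q t' * t ^+ n.+1 = evF (- H) t.
  rewrite evFN -EH /t'F exprS; have h := t_nz; field; by rewrite h.
have s2 : (size (- H)%R <= n.+2)%N by rewrite size_polyN; apply: (leq_trans sH); apply: leqnSn.
have E3 : t'' * evF R t'' * (t - 1) ^+ n3.+1 = evF (- H3) t.
  rewrite evFN -EH3 /t''F exprS; have h := omt_nz; have h' := tm1_nz; field; by rewrite h.
have s3 : (size (- H3)%R <= n3.+2)%N by rewrite size_polyN; apply: (leq_trans sH3); apply: leqnSn.
have [c2 [c3 [e2 e3]]] := Key0 E1 E2 s2 E3 s3 Es.
have c2_0 : c2 = 0.
  have : - H = c2 *: 'X^(n.+1).
    by apply: ev_inj; rewrite -E2 e2 evFZ ?evFXn ?evFexp ?evFX.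
  move=> Eq; have := congr1 (fun q : {poly k} => q`_(n.+1)) Eq; rewrite /= coef_top; last by rewrite size_polyN.
  by rewrite coefZ coefXn eqxx mulr1 => <-.
have c3_0 : c3 = 0.
  have : - H3 = c3 *: ('X - 1%:P) ^+ n3.+1.
    by apply: ev_inj; rewrite -E3 e3 evFZ evFexp Xm1E.
  move=> Eq; have := congr1 (fun q : {poly k} => q`_(n3.+1)) Eq; rewrite /= coef_top; last by rewrite size_polyN.
  have lc : (('X - 1%:P) ^+ n3.+1 : {poly k})`_n3.+1 = 1.
    by have := monicP (monic_exp n3.+1 (monicXsubC (1 : k))); rewrite lead_coefE size_exp_XsubC.
  by rewrite coefZ lc mulr1 => <-.
have T2_0 : (t' - 1) * evF Q t' = 0 by rewrite e2 c2_0 rmorph0.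
have T3_0 : t'' * evF R t'' = 0 by rewrite e3 c3_0 rmorph0.
by split => //; apply: (solve3 Es).
Qed.

Lemma uniqC P Q R :
  t * evF P t + 1 * evF Q t' + (t'' - 1) * evF R t'' = 0 ->
  [/\ t * evF P t = 0, 1 * evF Q t' = 0 & (t'' - 1) * evF R t'' = 0].
Proof.
move=> Es.
have [n [H [sH EH]]] := hom_t' Q.
have [n3 [H3 [sH3 EH3]]] := hom_t'' R.
have E1 : t * evF P t = evF ('X * P) t by rewrite evFM evFX.
have E2 : 1 * evF Q t' * t ^+ n = evF H t by rewrite mul1r.
have E3 : (t'' - 1) * evF R t'' * (t - 1) ^+ n3.+1 = evF (- ('X * H3)) t.
  rewrite evFN evFM evFX -EH3 /t''F exprS; have h := omt_nz; have h' := tm1_nz; field; by rewrite h.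
have s3 : (size (- ('X * H3))%R <= n3.+2)%N.
  rewrite size_polyN; apply: leq_trans (size_polyMleq _ _) _; by rewrite size_polyX ?natn add2n /= ltnS.
have [c2 [c3 [e2 e3]]] := Key0 E1 E2 sH E3 s3 Es.
have e1 : t * evF P t = phi (- (c2 + c3)).
  by rewrite rmorphN rmorphD -e2 -e3; apply/eqP; rewrite -subr_eq0 -Es; apply/eqP; ring.
have c1_0 : - (c2 + c3) = 0.
  have : 'X * P = (- (c2 + c3))%:P by apply: ev_inj; rewrite -E1 evFC e1.
  by move/(congr1 (fun q => q.[0])); rewrite hornerM hornerX mul0r hornerC.
have c3_0 : c3 = 0.
  have : - ('X * H3) = c3 *: ('X - 1%:P) ^+ n3.+1.
    by apply: ev_inj; rewrite -E3 e3 evFZ evFexp Xm1E.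
  move/(congr1 (fun q => q.[0])); rewrite hornerN hornerM hornerX mul0r oppr0 hornerZ.
  rewrite horner_exp hornerXsubC sub0r => /esym /eqP; rewrite mulf_eq0 expf_eq0 oppr_eq0 oner_eq0 andbF orbF.
  by move/eqP.
have T1_0 : t * evF P t = 0 by rewrite e1 c1_0 rmorph0.
have T3_0 : (t'' - 1) * evF R t'' = 0 by rewrite e3 c3_0 rmorph0.
by split => //; move: Es; rewrite T1_0 T3_0 add0r addr0.
Qed.

Lemma inAF_1 : inAF 1. Proof. by rewrite -(rmorph1 phi); apply: inAF_phi. Qed.
Lemma inAF_0 : inAF 0. Proof. by rewrite -(rmorph0 phi); apply: inAF_phi. Qed.
Lemma inAF_t : inAF t. Proof. by rewrite -(evFX phi t); apply: inAF_ev. Qed.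
Lemma inAF_2 : inAF 2%:R. Proof. by rewrite -(rmorph_nat phi); apply: inAF_phi. Qed.
Lemma inAF_2inv : inAF 2%:R^-1.
Proof. by rewrite -(rmorph_nat phi) -fmorphV; apply: inAF_phi. Qed.
Lemma inAF_sub f g : inAF f -> inAF g -> inAF (f - g).
Proof. by move=> Hf Hg; apply: inAF_add Hf (inAF_opp Hg). Qed.

Ltac inA := repeat match goal with
  | H : inAF ?x |- inAF ?x => exact H
  | |- inAF (_ + _) => apply: inAF_add
  | |- inAF (- _) => apply: inAF_opp
  | |- inAF (_ * _) => apply: inAF_mul
  | |- inAF 1 => apply: inAF_1
  | |- inAF 0 => apply: inAF_0
  | |- inAF t => apply: inAF_t
  | |- inAF (2%:R) => apply: inAF_2
  | |- inAF (2%:R^-1) => apply: inAF_2inv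
  | |- inAF (t^-1) => apply: inAF_tinv
  | |- inAF ((1 - t)^-1) => apply: inAF_omtinv
  end.

Definition inGF (M : 'M[F]_2) := \tr M = 0 /\ forall i j, inAF (M i j).

Lemma mx2F_entries (Pr : F -> Prop) a b c d : Pr a -> Pr b -> Pr c -> Pr d ->
  forall i j, Pr (mx2F a b c d i j).
Proof. by move=> *; rewrite mxE; case: ifP; case: ifP. Qed.

Lemma inGF_S3 x y z : inAF x -> inAF y -> inAF z -> inGF (S3 t 1 1 1 x y z).
Proof.
move=> Hx Hy Hz; split; first by apply: S3tr; rewrite ?t_nz ?omt_nz.
rewrite S3E ?t_nz ?omt_nz //; apply: mx2F_entries; inA.
Qed.
Lemma inGF_add M N : inGF M -> inGF N -> inGF (M + N).
Proof.
move=> [trM HM] [trN HN]; split; first by rewrite mxtraceD trM trN addr0.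
by move=> i j; rewrite mxE; apply: inAF_add.
Qed.

Lemma S3_111 f0 f1 f2 x y z : S3 t f0 f1 f2 x y z = S3 t 1 1 1 (f0 * x) (f1 * y) (f2 * z).
Proof. by rewrite /S3 !mul1r. Qed.
Lemma S3_add x y z x' y' z' :
  S3 t 1 1 1 x y z + S3 t 1 1 1 x' y' z' = S3 t 1 1 1 (x + x') (y + y') (z + z').
Proof. by have := S3lin h2F t_nz omt_nz 1 1 1 1 x y z x' y' z'; rewrite scale1r !mul1r. Qed.
Lemma S3_eq0 x y z : S3 t 1 1 1 x y z = 0 -> [/\ x = 0, y = 0 & z = 0].
Proof.
move=> E; have [ex ey ez] := S3coef h2F t_nz omt_nz x y z.
rewrite E /cB /cC /cA !mxE in ex ey ez.
have h := t_nz.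
split; [rewrite ex | rewrite ey | rewrite ez]; field; by rewrite h.
Qed.
Lemma S3_direct f0 f1 f2 x y z : S3 t f0 f1 f2 x y z = 0 ->
  [/\ (f0 * x) *: u0F t = 0, (f1 * y) *: u1F t = 0 & (f2 * z) *: u2F t = 0].
Proof.
by rewrite S3_111 => /S3_eq0 [-> -> ->]; rewrite !scale0r.
Qed.

Definition OmA M := exists p q r, M = S3 t (t - 1) 1 t (evF p t) (evF q t) (evF r t).
Definition OmB M := exists p q r, M = S3 t t' (t' - 1) 1 (evF p t') (evF q t') (evF r t').
Definition OmC M := exists p q r, M = S3 t 1 t'' (t'' - 1) (evF p t'') (evF q t'') (evF r t'').

Lemma inAF_t' : inAF t'. Proof. rewrite /t'F; inA. Qed.
Lemma inAF_t'' : inAF t''. Proof. rewrite /t''F; inA. Qed.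

Lemma OmA_G M : OmA M -> inGF M.
Proof.
move=> [p [q [r ->]]]; rewrite S3_111; apply: inGF_S3; inA;
  match goal with |- inAF (evF _ _) => apply: inAF_ev end.
Qed.
Lemma OmB_G M : OmB M -> inGF M.
Proof.
move=> [p [q [r ->]]]; rewrite S3_111; apply: inGF_S3; inA;
  match goal with |- inAF (evF _ _) => apply: inAF_evs; apply: inAF_t' | |- inAF (t'F _) => apply: inAF_t' end.
Qed.
Lemma OmC_G M : OmC M -> inGF M.
Proof.
move=> [p [q [r ->]]]; rewrite S3_111; apply: inGF_S3; inA;
  match goal with |- inAF (evF _ _) => apply: inAF_evs; apply: inAF_t'' | |- inAF (t''F _) => apply: inAF_t'' end.
Qed.

Lemma gds :
  (forall M, inGF M <-> exists a b c, [/\ OmA a, OmB b, OmC c & M = a + b + c]) /\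
  (forall a b c, OmA a -> OmB b -> OmC c -> a + b + c = 0 -> [/\ a = 0, b = 0 & c = 0]).
Proof.
split.
- move=> M; split.
  + move=> [trM HM].
    have EM := S3decomp h2F t_nz omt_nz trM.
    have h00 := HM 0 0; have h01 := HM 0 1; have h10 := HM 1 0.
    have hA : inAF (cA t M) by rewrite /cA; inA.
    have hB : inAF (cB t M) by rewrite /cB /cA /t''F; inA.
    have hC : inAF (cC t M) by rewrite /cC /cA; inA.
    have [P0 [Q0 [R0 E0]]] := shapeA hA.
    have [P1 [Q1 [R1 E1]]] := shapeB hB.
    have [P2 [Q2 [R2 E2]]] := shapeC hC.
    exists (S3 t (t - 1) 1 t (evF P0 t) (evF P1 t) (evF P2 t)),
           (S3 t t' (t' - 1) 1 (evF Q0 t') (evF Q1 t') (evF Q2 t')),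
           (S3 t 1 t'' (t'' - 1) (evF R0 t'') (evF R1 t'') (evF R2 t'')).
    split; [by exists P0, P1, P2 | by exists Q0, Q1, Q2 | by exists R0, R1, R2 | ].
    apply: eq_trans EM _.
    by rewrite (S3_111 (t - 1) 1 t) (S3_111 t' (t' - 1) 1) (S3_111 1 t'' (t'' - 1)) !S3_add -E0 -E1 -E2.
  + move=> [a [b [c [Ha Hb Hc ->]]]].
    by apply: inGF_add; [apply: inGF_add|]; [apply: OmA_G | apply: OmB_G | apply: OmC_G].
- move=> a b c [P0 [P1 [P2 ->]]] [Q0 [Q1 [Q2 ->]]] [R0 [R1 [R2 ->]]].
  rewrite (S3_111 (t - 1) 1 t) (S3_111 t' (t' - 1) 1) (S3_111 1 t'' (t'' - 1)) !S3_add => /S3_eq0 [eA eB eC].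
  have [a1 b1 c1] := uniqA eA.
  have [a2 b2 c2] := uniqB eB.
  have [a3 b3 c3] := uniqC eC.
  rewrite a1 b1 c1 a2 b2 c2 a3 b3 c3.
  by split; apply/eqP; rewrite -(S30 h2F t_nz omt_nz 1 1 1) eqxx.
Qed.

End Decomp.

Section Glue.
Variable k : fieldType.
Definition kFm : {rmorphism k -> kt k} := (@tofrac _ \o polyC).
Local Notation t := (tt k).

Lemma ev_tofrac p : evF kFm p t = tofrac p.
Proof.
elim/poly_ind: p => [|p c IH]; first by rewrite evF0 rmorph0.
by rewrite evF_mulXC IH rmorphD rmorphM.
Qed.
Lemma Htr_k p : evF kFm p t = 0 -> p = 0.
Proof. by rewrite ev_tofrac => /eqP; rewrite tofrac_eq0 => /eqP. Qed.
Lemma inA_iff f : inA f <-> inAF kFm t f.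
Proof.
split => -[p [a [b E]]]; exists p, a, b; by rewrite E ?ev_tofrac.
Qed.
Lemma inG_iff M : inG M <-> inGF kFm t M.
Proof.
split => -[tr H]; split => // i j; by apply/inA_iff.
Qed.
End Glue.

Unset Implicit Arguments.

Theorem proposition1p6 (k : fieldType) (hk : (2%:R : k) != 0)
  (L : lmodType k) (br : L -> L -> L) (X : 'I_4 -> 'I_4 -> L)
  (psi : L -> 'M[kt k]_2) :
  is_lie_bracket br ->
  tetra_relations br X ->
  (forall v, lie_gen br (fun w => exists i j, i != j /\ w = X i j) v) ->
  (forall (a : k) u v, psi (a *: u + v) = kF a *: psi u + psi v) ->
  (forall u v, psi (br u v) = lie_br (psi u) (psi v)) ->
  psi (X i1 i2) = xm k ->
  psi (X i2 i3) = ym k ->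
  psi (X i3 i1) = zm k ->
  psi (X i0 i3) = tt k *: ym k + (tt k - 1) *: zm k ->
  psi (X i0 i1) = tt' k *: zm k + (tt' k - 1) *: xm k ->
  psi (X i0 i2) = tt'' k *: xm k + (tt'' k - 1) *: ym k ->
  let PsiOmega   := fun M => exists v, lie_gen br (fun w => w = X i1 i2 \/ w = X i0 i3) v /\ M = psi v in
  let PsiOmega'  := fun M => exists v, lie_gen br (fun w => w = X i2 i3 \/ w = X i0 i1) v /\ M = psi v in
  let PsiOmega'' := fun M => exists v, lie_gen br (fun w => w = X i3 i1 \/ w = X i0 i2) v /\ M = psi v in
  [/\ is_direct_sum3 PsiOmega   (tt k - 1) 1 (tt k) (tt k),
      is_direct_sum3 PsiOmega'  (tt' k) (tt' k - 1) 1 (tt' k),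
      is_direct_sum3 PsiOmega'' 1 (tt'' k) (tt'' k - 1) (tt'' k) &
      g_direct_sum PsiOmega PsiOmega' PsiOmega''].
Proof.
move=> _ _ _ psi_lin psi_br H12 H23 H31 H03 H01 H02 PsiOmega PsiOmega' PsiOmega''.
have Htr := @Htr_k k.
have h2F : (2%:R : kt k) != 0 by rewrite -(rmorph_nat (kFm k)) fmorph_eq0.
have h0 := t_nz Htr; have h1 := omt_nz Htr.
have psi_lin' : forall (a : k) u v, psi (a *: u + v) = kFm k a *: psi u + psi v := psi_lin.
have psi_br' : forall u v, psi (br u v) = lie_brF (psi u) (psi v) := psi_br.
have EO : forall M, PsiOmega M <-> OmA (kFm k) (tt k) M.
  move=> M; apply: (@Qm_Sm k _ (kFm k) hk L br psi psi_lin' psi_br' (CO (tt k)) (tt k)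
     (S3lin h2F h0 h1 _ _ _) (S30 h2F h0 h1 _ _ _) (brO h2F h0 h1) (X i1 i2) (X i0 i3) _ _ M).
  - by rewrite H12 -(genO1 h2F h0 h1).
  - by rewrite H03 -(genO2 h2F h0 h1).
have EO' : forall M, PsiOmega' M <-> OmB (kFm k) (tt k) M.
  have Hg1 : psi (X i2 i3) = CO' (tt k) 0 2%:R (- 2%:R) by rewrite H23 -(genO'1 h2F h0 h1).
  have Hg2 : psi (X i0 i1) = CO' (tt k) 0 2%:R 2%:R by rewrite H01 -(genO'2 h2F h0 h1).
  move=> M; apply: iff_trans (@Qm_Sm k _ (kFm k) hk L br psi psi_lin' psi_br' (CO' (tt k)) (t'F (tt k))
     (fun l x y z x' y' z' => S3lin h2F h0 h1 _ _ _ l z x y z' x' y')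
     (S30 h2F h0 h1 _ _ _) (brO' h2F h0 h1) (X i2 i3) (X i0 i1) Hg1 Hg2 M) _.
  split => -[p [q [r ->]]]; first by exists r, p, q.
  by exists q, r, p.
have EO'' : forall M, PsiOmega'' M <-> OmC (kFm k) (tt k) M.
  have Hg1 : psi (X i3 i1) = CO'' (tt k) 0 2%:R (- 2%:R) by rewrite H31 -(genO''1 h2F h0 h1).
  have Hg2 : psi (X i0 i2) = CO'' (tt k) 0 2%:R 2%:R by rewrite H02 -(genO''2 h2F h0 h1).
  move=> M; apply: iff_trans (@Qm_Sm k _ (kFm k) hk L br psi psi_lin' psi_br' (CO'' (tt k)) (t''F (tt k))
     (fun l x y z x' y' z' => S3lin h2F h0 h1 _ _ _ l y z x y' z' x')
     (S30 h2F h0 h1 _ _ _) (brO'' h2F h0 h1) (X i3 i1) (X i0 i2) Hg1 Hg2 M) _.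
  split => -[p [q [r ->]]]; first by exists q, r, p.
  by exists r, p, q.
have [G1 G2] := gds Htr h2F.
split.
- split; first exact: EO.
  by move=> p q r /(S3_direct Htr h2F).
- split; first exact: EO'.
  by move=> p q r /(S3_direct Htr h2F).
- split; first exact: EO''.
  by move=> p q r /(S3_direct Htr h2F).
- split.
  + move=> M; rewrite inG_iff G1; split => -[a [b [c [Ha Hb Hc E]]]]; exists a, b, c;
      split => //; by [apply/EO | apply/EO' | apply/EO''].
  + move=> a b c Ha Hb Hc; apply: G2; by [apply/EO | apply/EO' | apply/EO''].
Qed.
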